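(* For each random forest with majority voting there exists an equivalent boosted tree ensemble (i.e., one computing the same classification function) whose size is polynomial in the size of the starting random forest.
   Context: Features $\mathcal{F}$ with domains $D_i$, feature space $\mathbb{F}=\prod_i D_i$, finite class set $\mathcal{K}$. A decision tree is a binary rooted tree with internal nodes labeled by split conditions $x_i<d$; each point reaches a unique leaf. A random forest with majority voting has leaves labeled by classes and predicts the class voted by the largest number of trees. A boosted tree ensemble consists of decision trees partitioned into groups, one per class, each leaf carrying a real weight; the score of a class at $\mathbf{x}$ is the sum of the weights of the leaves reached by $\mathbf{x}$ in the trees of that class's group, and the prediction is a class of maximal score. Size is measured as the total number of tree nodes. *)

(* Defs.v *)
From HB Require Import structures.
From mathcomp Require Import all_boot all_order all_algebra.
From mathcomp Require Import reals.
Set Implicit Arguments. Unset Strict Implicit. Unset Printing Implicit Defensive.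
Import Order.TTheory GRing.Theory Num.Theory.

Section Trees.
Variables (F : Type) (D : F -> Type) (lt : forall i, D i -> D i -> bool).

Inductive dtree (L : Type) : Type :=
  | Leaf of L
  | Node (i : F) (d : D i) of dtree L & dtree L.

Fixpoint dt_eval (L : Type) (t : dtree L) (x : forall i, D i) : L :=
  match t with
  | Leaf l => l
  | Node i d t1 t2 => if lt (x i) d then dt_eval t1 x else dt_eval t2 x
  end.

Fixpoint dt_size (L : Type) (t : dtree L) : nat :=
  match t with
  | Leaf _ => 1
  | Node _ _ t1 t2 => (dt_size t1 + dt_size t2).+1
  end.

Definition rf_votes (K : eqType) (rf : seq (dtree K)) (x : forall i, D i) (k : K) : nat :=
  count (fun t => dt_eval t x == k) rf.

Definition rf_pred (K : eqType) (rf : seq (dtree K)) (x : forall i, D i) (k : K) : Prop :=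
  forall k', rf_votes rf x k' <= rf_votes rf x k.

Definition rf_size (K : Type) (rf : seq (dtree K)) : nat :=
  \sum_(t <- rf) dt_size t.

Definition bt_score (R : realType) (K : Type) (bt : K -> seq (dtree R))
  (x : forall i, D i) (k : K) : R :=
  (\sum_(t <- bt k) dt_eval t x)%R.

Definition bt_pred (R : realType) (K : Type) (bt : K -> seq (dtree R))
  (x : forall i, D i) (k : K) : Prop :=
  forall k', (bt_score bt x k' <= bt_score bt x k)%R.

Definition bt_size (R : realType) (K : finType) (bt : K -> seq (dtree R)) : nat :=
  \sum_(k : K) \sum_(t <- bt k) dt_size t.

End Trees.

(* Main.v *)
Require Import Defs.
From HB Require Import structures.
From mathcomp Require Import all_boot all_order all_algebra.
From mathcomp Require Import reals zify.
Import Order.TTheory GRing.Theory Num.Theory.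

Section Aux.
Variables (R : realType) (F : Type) (D : F -> Type)
  (lt : forall i, D i -> D i -> bool) (K : finType).

Fixpoint leaves (t : dtree D K) : seq K :=
  match t with Leaf l => [:: l] | Node _ _ t1 t2 => leaves t1 ++ leaves t2 end.

Fixpoint relabel (k : K) (t : dtree D K) : dtree D R :=
  match t with
  | Leaf l => @Leaf F D R ((l == k)%:R)%R
  | Node i d t1 t2 => @Node F D R i d (relabel k t1) (relabel k t2) end.

Lemma relabel_eval k t x : dt_eval lt (relabel k t) x = ((dt_eval lt t x == k)%:R)%R.
Proof. elim: t => [l|i d t1 IH1 t2 IH2] //=; by case: ifP. Qed.

Lemma relabel_size k t : dt_size (relabel k t) = dt_size t.
Proof. by elim: t => [l|i d t1 IH1 t2 IH2] //=; rewrite IH1 IH2. Qed.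

Lemma eval_leaves t x : dt_eval lt t x \in leaves t.
Proof.
elim: t => [l|i d t1 IH1 t2 IH2] /=; first by rewrite inE.
by case: ifP => _; rewrite mem_cat ?IH1 ?IH2 ?orbT.
Qed.

Lemma leaves_size t : size (leaves t) <= dt_size t.
Proof.
elim: t => [l|i d t1 IH1 t2 IH2] //=; rewrite size_cat.
by apply: leqW; apply: leq_add.
Qed.

Definition mkbt (rf : seq (dtree D K)) (k : K) : seq (dtree D R) :=
  [seq relabel k t | t <- rf & k \in leaves t].

Lemma score_votes rf x k : bt_score lt (mkbt rf) x k = ((rf_votes lt rf x k)%:R)%R.
Proof.
rewrite /bt_score /mkbt big_map big_filter big_mkcond /rf_votes.
elim: rf => [|t rf IH]; first by rewrite big_nil.
rewrite big_cons IH /= natrD; congr (_ + _)%R.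
rewrite relabel_eval; case: ifP => // Hn.
case: eqP => // E; rewrite -E eval_leaves in Hn; by [].
Qed.

Lemma sq_sum (s : seq nat) : \sum_(n <- s) n * n <= (\sum_(n <- s) n) * (\sum_(n <- s) n).
Proof.
elim: s => [|n s IH]; first by rewrite big_nil.
rewrite !big_cons; nia.
Qed.

Lemma size_bound rf : bt_size (mkbt rf) <= (rf_size rf).+1 ^ 2.
Proof.
rewrite /bt_size /mkbt.
under eq_bigr => k _ do rewrite big_map big_filter big_mkcond.
rewrite exchange_big /=.
apply: (@leq_trans (\sum_(t <- rf) dt_size t * dt_size t)).
  apply: leq_sum => t _.
  under eq_bigr => k _ do rewrite relabel_size.
  rewrite -big_mkcond /= sum_nat_const.
  apply: leq_mul => //; apply: leq_trans (leaves_size t).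
  exact: card_size.
apply: (@leq_trans ((rf_size rf) * (rf_size rf))).
  rewrite /rf_size.
  have := sq_sum [seq dt_size t | t <- rf].
  by rewrite !big_map.
rewrite expnS expn1; apply: leq_mul; exact: leqnSn.
Qed.

End Aux.

Theorem mainTheorem4 :
  exists c e : nat,
    forall (R : realType) (F : Type) (D : F -> Type)
           (lt : forall i, D i -> D i -> bool) (K : finType)
           (rf : seq (dtree D K)),
    exists bt : K -> seq (dtree D R),
      (forall (x : forall i, D i) (k : K),
          rf_pred lt rf x k <-> bt_pred lt bt x k) /\
      bt_size bt <= c * (rf_size rf).+1 ^ e.
Proof.
exists 1, 2 => R F D lt K rf.
exists (@mkbt R F D K rf); split; last by rewrite mul1n; apply: size_bound.
move=> x k; rewrite /rf_pred /bt_pred; split=> H k'.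
  by rewrite !score_votes ler_nat.
by have := H k'; rewrite !score_votes ler_nat.
Qed.
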